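(* Let $A,M\in\mathbb{C}^{n\times n}$ be Hermitian with $M$ positive definite, and let the eigenvalues of the pair $(A,M)$ be $\lambda_1<\lambda_2\le\cdots\le\lambda_n$, with $\mathcal{X}_1$ the eigenspace associated with $\lambda_1$. Put $A_{\lambda_1}=A-\lambda_1 M$. Let $T\in\mathbb{C}^{n\times n}$ be Hermitian positive definite. Let $x^{(0)}\in\mathbb{C}^n$ be neither an eigenvector of $(A,M)$ associated with $\lambda_1$ nor $M$-orthogonal to $\mathcal{X}_1$, and let $x^{(0)},x^{(1)},\ldots$ be the iterates of the following heuristic preconditioned CG iteration (for as long as it is defined): set $r^{(0)}=-A_{\lambda_1}x^{(0)}$, $\gamma^{(0)}=(Tr^{(0)})^*r^{(0)}$, $p^{(0)}=Tr^{(0)}$, and for $i=0,1,\ldots$: $w=A_{\lambda_1}p^{(i)}$, $\delta=\gamma^{(i)}/(w^*p^{(i)})$, $x^{(i+1)}=x^{(i)}+\delta p^{(i)}$, $r^{(i+1)}=r^{(i)}-\delta w$, $\gamma^{(i+1)}=(Tr^{(i+1)})^*r^{(i+1)}$, $p^{(i+1)}=Tr^{(i+1)}+(\gamma^{(i+1)}/\gamma^{(i)})p^{(i)}$. Then for every $i$, $x^{(i)}-x^{(0)}$ is $T^{-1}$-orthogonal to $\mathcal{X}_1$ (i.e. $y^*T^{-1}(x^{(i)}-x^{(0)})=0$ for all $y\in\mathcal{X}_1$), and $$\|x^{(i)}\|_M^2\ge\mu_1\|x^{(0)}\|_{T^{-1}}^2\big(\cos\angle_{T^{-1}}(x^{(0)},\mathcal{X}_1)\big)^2,$$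 where $\mu_1$ is the smallest eigenvalue of the matrix pair $(M,T^{-1})$.
   Context: $\|y\|_M=(y^*My)^{1/2}$, $\|y\|_{T^{-1}}=(y^*T^{-1}y)^{1/2}$. $\angle_{T^{-1}}(x,\mathcal{X}_1)$ is the angle between the vector $x$ and the subspace $\mathcal{X}_1$ with respect to the inner product $(u,v)\mapsto u^*T^{-1}v$, i.e. $\cos\angle_{T^{-1}}(x,\mathcal{X}_1)=\max_{y\in\mathcal{X}_1\setminus\{0\}}|y^*T^{-1}x|/(\|y\|_{T^{-1}}\|x\|_{T^{-1}})$. *)

(* Defs.v *)
(* Complex numbers: an arbitrary numClosedFieldType C
   (e.g. algC, or complex R for a real closed field R). *)
From HB Require Import structures.
From mathcomp Require Import all_boot all_order all_algebra.
Set Implicit Arguments. Unset Strict Implicit. Unset Printing Implicit Defensive.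
Import Order.TTheory GRing.Theory Num.Theory.
Local Open Scope ring_scope.

Section Defs.
Variables (C : numClosedFieldType) (n : nat).

Definition adj (m k : nat) (B : 'M[C]_(m, k)) : 'M[C]_(k, m) := map_mx Num.conj (B^T).

Definition sform (B : 'M[C]_n) (y x : 'cV[C]_n) : C := (adj y *m B *m x) 0 0.

Definition hermitian_mx (B : 'M[C]_n) : Prop := adj B = B.

Definition posdef_mx (B : 'M[C]_n) : Prop :=
  hermitian_mx B /\ forall x : 'cV[C]_n, x != 0 -> 0 < sform B x x.

Definition pair_charpoly (A M : 'M[C]_n) : {poly C} :=
  \det (map_mx polyC A - 'X *: map_mx polyC M).

Definition pair_eigenvalue (A M : 'M[C]_n) (l : C) : Prop :=
  root (pair_charpoly A M) l.

Definition smallest_pair_eigenvalue (A M : 'M[C]_n) (l : C) : Prop :=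
  pair_eigenvalue A M l /\ forall l', pair_eigenvalue A M l' -> l <= l'.

Definition simple_pair_eigenvalue (A M : 'M[C]_n) (l : C) : Prop :=
  root (pair_charpoly A M) l /\
  ~~ root (pair_charpoly A M %/ ('X - l%:P)) l.

Definition pair_eigenspace (A M : 'M[C]_n) (l : C) (x : 'cV[C]_n) : Prop :=
  A *m x = l *: (M *m x).

Record cg_state := CGState { cg_x : 'cV[C]_n; cg_r : 'cV[C]_n;
                             cg_gamma : C; cg_p : 'cV[C]_n }.

Definition cg_init (Al T : 'M[C]_n) (x0 : 'cV[C]_n) : cg_state :=
  let r0 := - (Al *m x0) in
  CGState x0 r0 ((adj (T *m r0) *m r0) 0 0) (T *m r0).

Definition cg_w (Al : 'M[C]_n) (s : cg_state) : 'cV[C]_n := Al *m cg_p s.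

Definition cg_den (Al : 'M[C]_n) (s : cg_state) : C :=
  (adj (cg_w Al s) *m cg_p s) 0 0.

Definition cg_step (Al T : 'M[C]_n) (s : cg_state) : cg_state :=
  let w := cg_w Al s in
  let delta := cg_gamma s / cg_den Al s in
  let x' := cg_x s + delta *: cg_p s in
  let r' := cg_r s - delta *: w in
  let gamma' := (adj (T *m r') *m r') 0 0 in
  let p' := T *m r' + (gamma' / cg_gamma s) *: cg_p s in
  CGState x' r' gamma' p'.

Fixpoint cg_iter (Al T : 'M[C]_n) (x0 : 'cV[C]_n) (i : nat) : cg_state :=
  match i with
  | 0 => cg_init Al T x0
  | i'.+1 => cg_step Al T (cg_iter Al T x0 i')
  end.

(* x^{(i)} is defined: every division performed to compute it has a
   nonzero denominator *)
Definition cg_defined (Al T : 'M[C]_n) (x0 : 'cV[C]_n) (i : nat) : Prop :=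
  forall j, (j < i)%N ->
    cg_den Al (cg_iter Al T x0 j) != 0 /\
    ((j.+1 < i)%N -> cg_gamma (cg_iter Al T x0 j) != 0).

(* c = cos of the angle, w.r.t. the inner product (u,v) |-> u^* B v, between
   x and the subspace X, defined as a maximum over X \ {0} *)
Definition cos_angle_ratio (B : 'M[C]_n) (x y : 'cV[C]_n) : C :=
  `|sform B y x| / (sqrtC (sform B y y) * sqrtC (sform B x x)).

Definition is_cos_angle (B : 'M[C]_n) (x : 'cV[C]_n) (X : 'cV[C]_n -> Prop)
  (c : C) : Prop :=
  (exists2 y, X y /\ y != 0 & cos_angle_ratio B x y = c) /\
  (forall y, X y -> y != 0 -> cos_angle_ratio B x y <= c).

End Defs.

(* Main.v *)
Require Import Defs.
From HB Require Import structures.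
From mathcomp Require Import all_boot all_order all_algebra.
From mathcomp Require Import ring.
Import Order.TTheory GRing.Theory Num.Theory.
Local Open Scope ring_scope.

Module Helpers.
Set Implicit Arguments. Unset Strict Implicit. Unset Printing Implicit Defensive.

Section Aux.
Variable C : numClosedFieldType.

Lemma cadjM m k p (A : 'M[C]_(m, k)) (B : 'M[C]_(k, p)) :
  adj (A *m B) = adj B *m adj A.
Proof. by rewrite /adj trmx_mul map_mxM. Qed.

Lemma cadjK m k (A : 'M[C]_(m, k)) : adj (adj A) = A.
Proof. by apply/matrixP => i j; rewrite !mxE conjCK. Qed.

Lemma cadjD m k (A B : 'M[C]_(m, k)) : adj (A + B) = adj A + adj B.
Proof. by apply/matrixP => i j; rewrite !mxE rmorphD. Qed.

Lemma cadjN m k (A : 'M[C]_(m, k)) : adj (- A) = - adj A.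
Proof. by apply/matrixP => i j; rewrite !mxE rmorphN. Qed.

Lemma cadjB m k (A B : 'M[C]_(m, k)) : adj (A - B) = adj A - adj B.
Proof. by rewrite cadjD cadjN. Qed.

Lemma cadjZ m k a (A : 'M[C]_(m, k)) : adj (a *: A) = a^* *: adj A.
Proof. by apply/matrixP => i j; rewrite !mxE rmorphM. Qed.

Lemma cadj0 m k : adj (0 : 'M[C]_(m, k)) = 0.
Proof. by apply/matrixP => i j; rewrite !mxE rmorph0. Qed.

Lemma cadj1 k : adj (1%:M : 'M[C]_k) = 1%:M.
Proof. by apply/matrixP => i j; rewrite !mxE rmorphMn rmorph1 eq_sym. Qed.

Lemma cadj_diag k (d : 'rV[C]_k) : adj (diag_mx d) = diag_mx (map_mx Num.conj d).
Proof. by apply/matrixP => i j; rewrite !mxE rmorphMn eq_sym; case: eqP => [->|]. Qed.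

Lemma conj_entry k (A : 'M[C]_(1, k)) (B : 'M[C]_(k, 1)) :
  ((A *m B) 0 0)^* = (adj B *m adj A) 0 0.
Proof. by rewrite -cadjM !mxE. Qed.

Lemma cadj_inv k (A : 'M[C]_k) : adj (invmx A) = invmx (adj A).
Proof.
rewrite /adj trmx_inv.
case: k A => [|k] A; first by rewrite !thinmx0.
by rewrite map_mx_inv.
Qed.

End Aux.


Section Sf.
Variables (C : numClosedFieldType) (n : nat).
Implicit Types (B P : 'M[C]_n) (x y : 'cV[C]_n).

Lemma sformDr B y x1 x2 : sform B y (x1 + x2) = sform B y x1 + sform B y x2.
Proof. by rewrite /sform mulmxDr mxE. Qed.
Lemma sformZr B y a x : sform B y (a *: x) = a * sform B y x.
Proof. by rewrite /sform -scalemxAr mxE. Qed.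
Lemma sformNr B y x : sform B y (- x) = - sform B y x.
Proof. by rewrite /sform mulmxN mxE. Qed.
Lemma sformBr B y x1 x2 : sform B y (x1 - x2) = sform B y x1 - sform B y x2.
Proof. by rewrite sformDr sformNr. Qed.
Lemma sformDl B y1 y2 x : sform B (y1 + y2) x = sform B y1 x + sform B y2 x.
Proof. by rewrite /sform cadjD !mulmxDl mxE. Qed.
Lemma sformZl B a y x : sform B (a *: y) x = a^* * sform B y x.
Proof. by rewrite /sform cadjZ -!scalemxAl mxE. Qed.
Lemma sformNl B y x : sform B (- y) x = - sform B y x.
Proof. by rewrite /sform cadjN !mulNmx mxE. Qed.
Lemma sformBl B y1 y2 x : sform B (y1 - y2) x = sform B y1 x - sform B y2 x.
Proof. by rewrite sformDl sformNl. Qed.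
Lemma sform_conj B y x : (sform B y x)^* = sform (adj B) x y.
Proof. by rewrite /sform conj_entry !cadjM cadjK mulmxA. Qed.
Lemma sform_herm B y x : hermitian_mx B -> (sform B y x)^* = sform B x y.
Proof. by move=> hB; rewrite sform_conj hB. Qed.
Lemma sform_real B x : hermitian_mx B -> sform B x x \is Num.real.
Proof. by move=> hB; apply/CrealP; rewrite sform_herm. Qed.
Lemma sform_congr B P y x : sform (adj P *m B *m P) y x = sform B (P *m y) (P *m x).
Proof. by rewrite /sform cadjM !mulmxA. Qed.
Lemma sform_mulr B P y x : sform (B *m P) y x = sform B y (P *m x).
Proof. by rewrite /sform !mulmxA. Qed.
Lemma sform_mull B P y x : sform (adj P *m B) y x = sform B (P *m y) x.
Proof. by rewrite /sform cadjM !mulmxA. Qed.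

Lemma sform_diag (d : 'rV[C]_n) x :
  sform (diag_mx d) x x = \sum_i d 0 i * `|x i 0| ^+ 2.
Proof.
rewrite /sform mul_mx_diag mxE; apply: eq_bigr => i _.
by rewrite !mxE normCKC mulrAC mulrC mulrA.
Qed.

Lemma sform1 x : sform 1%:M x x = \sum_i `|x i 0| ^+ 2.
Proof.
have -> : (1%:M : 'M[C]_n) = diag_mx (const_mx 1).
  by apply/matrixP => i j; rewrite !mxE.
by rewrite sform_diag; apply: eq_bigr => i _; rewrite mxE mul1r.
Qed.

Lemma sform1_ge0 x : 0 <= sform 1%:M x x.
Proof. by rewrite sform1 sumr_ge0 // => i _; rewrite exprn_ge0. Qed.

Lemma sform1_gt0 x : x != 0 -> 0 < sform 1%:M x x.
Proof.
move=> nx; rewrite lt_def sform1_ge0 andbT; apply: contra nx.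
rewrite sform1 psumr_eq0 => [/allP H|i _]; last by rewrite exprn_ge0.
apply/eqP/matrixP => i j; rewrite ord1 mxE; apply/eqP.
by have := H i (mem_index_enum _); rewrite /= sqrf_eq0 normr_eq0.
Qed.

Lemma pair_root A B t : root (pair_charpoly A B) t = (\det (A - t *: B) == 0).
Proof.
rewrite /root /pair_charpoly.
set P := (X in \det X).
have -> : (\det P).[t] = horner_eval t (\det P) by [].
rewrite -det_map_mx; congr (\det _ == 0).
apply/matrixP => i j; rewrite !mxE /=; rewrite rmorphB rmorphM /= !horner_evalE !hornerE.
reflexivity.
Qed.

End Sf.


Section Pencil.
Variables (C : numClosedFieldType) (n : nat).
Implicit Types (B P : 'M[C]_n) (x y : 'cV[C]_n).

Lemma herm_hermsym B : hermitian_mx B -> B \is hermsymmx.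
Proof. by move=> hB; apply/is_hermitianmxP; rewrite expr0 scale1r; symmetry; exact: hB. Qed.

Lemma spectral_herm B : hermitian_mx B ->
  exists P, exists d : 'rV[C]_n, P *m adj P = 1%:M /\ B = adj P *m diag_mx d *m P.
Proof.
move=> hB; have /hermitian_normalmx/orthomx_spectralP E := herm_hermsym hB.
exists (spectralmx B), (spectral_diag B); split.
  by apply/unitarymxP; exact: spectral_unitarymx.
by rewrite {1}E invmx_unitary // spectral_unitarymx.
Qed.

Lemma pencil M N : hermitian_mx M -> posdef_mx N ->
  exists S, exists e : 'rV[C]_n,
    [/\ S \in unitmx, M = adj S *m diag_mx e *m S & N = adj S *m S].
Proof.
move=> hM [hN pN].
have [P [d [PP NE]]] := spectral_herm hN.
have PPa : adj P *m P = 1%:M := mulmx1C PP.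
have Punit : P \in unitmx by have [] := mulmx1_unit PP.
have dpos : forall i, 0 < d 0 i.
  move=> i; pose v : 'cV[C]_n := delta_mx i 0; pose u := adj P *m v.
  have Pu : P *m u = v by rewrite /u mulmxA PP mul1mx.
  have unz : u != 0.
    apply/eqP => u0; move: Pu; rewrite u0 mulmx0 => /matrixP /(_ i 0).
    by rewrite !mxE !eqxx /= => /eqP; rewrite eq_sym oner_eq0.
  have := pN u unz; rewrite NE sform_congr Pu sform_diag (bigD1 i) //=.
  rewrite big1 ?addr0; first by rewrite !mxE !eqxx normr1 expr1n mulr1.
  by move=> j /negbTE ji; rewrite !mxE ji /= normr0 expr0n /= mulr0.
pose s : 'rV[C]_n := \row_i sqrtC (d 0 i).
pose R := diag_mx s *m P.
have RR : adj R *m R = N.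
  rewrite /R cadjM cadj_diag !mulmxA -[adj P *m _ *m _]mulmxA mulmx_diag NE.
  congr (_ *m diag_mx _ *m _); apply/rowP => i; rewrite !mxE.
  have sr : sqrtC (d 0 i) \is Num.real by rewrite ger0_real // sqrtC_ge0 ltW.
  by rewrite conj_Creal // -expr2 sqrtCK.
have Runit : R \in unitmx.
  rewrite unitmx_mul Punit andbT unitmxE det_diag unitfE.
  by apply/prodf_neq0 => i _; rewrite mxE sqrtC_eq0 gt_eqF.
clearbody R.
pose Ri := invmx R.
pose M' := adj Ri *m M *m Ri.
have hM' : hermitian_mx M'.
  by rewrite /hermitian_mx /M' !cadjM cadjK hM mulmxA.
have [Q [e [QQ M'E]]] := spectral_herm hM'.
have QQa : adj Q *m Q = 1%:M := mulmx1C QQ.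
have Qunit : Q \in unitmx by have [] := mulmx1_unit QQ.
exists (Q *m R), e; split.
- by rewrite unitmx_mul Qunit Runit.
- rewrite cadjM -!mulmxA [adj Q *m _]mulmxA [adj Q *m _ *m _]mulmxA -M'E.
  rewrite /M' !mulmxA -cadjM mulVmx // cadj1 mul1mx -mulmxA mulVmx //.
  by rewrite mulmx1.
- by rewrite cadjM mulmxA -[adj R *m _ *m _]mulmxA QQa mulmx1 RR.
Qed.

End Pencil.


Section Bound.
Variables (C : numClosedFieldType) (n : nat).
Implicit Types (B P : 'M[C]_n) (x y : 'cV[C]_n).

Lemma sform_diag_delta (d : 'rV[C]_n) k :
  sform (diag_mx d) (delta_mx k 0) (delta_mx k 0) = d 0 k.
Proof.
rewrite sform_diag (bigD1 k) //= big1 ?addr0; first by rewrite !mxE !eqxx normr1 expr1n mulr1.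
by move=> j /negbTE ji; rewrite !mxE ji /= normr0 expr0n /= mulr0.
Qed.

Lemma pencil_bound M N mu : posdef_mx M -> posdef_mx N ->
  smallest_pair_eigenvalue M N mu ->
  0 < mu /\ forall x, mu * sform N x x <= sform M x x.
Proof.
move=> [hM pM] pdN [rmu minmu].
have [S [e [Su ME NE]]] := pencil hM pdN.
have detE t : \det (M - t *: N) = \det (adj S) * (\prod_i (e 0 i - t)) * \det S.
  have -> : M - t *: N = adj S *m diag_mx (\row_i (e 0 i - t)) *m S.
    have -> : diag_mx (\row_i (e 0 i - t)) = diag_mx e - t *: 1%:M.
      apply/matrixP => i j; rewrite !mxE.
      by case: eqP => _; rewrite ?mulr1n ?mulr0n ?mulr1 ?mulr0 ?subr0.
    by rewrite ME NE mulmxBr mulmxBl -scalemxAr -scalemxAl mulmx1.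
  by rewrite !det_mulmx det_diag; congr (_ * _ * _); apply: eq_bigr => i _; rewrite mxE.
have le_e : forall i, mu <= e 0 i.
  move=> i; apply: minmu; rewrite /pair_eigenvalue pair_root detE.
  by rewrite (bigD1 i) //= subrr mul0r mulr0 mul0r.
have Sadj : adj S \in unitmx.
  have : adj S *m adj (invmx S) = 1%:M by rewrite -cadjM mulVmx // cadj1.
  by case/mulmx1_unit.
have [k _ ek] : exists2 k, true & e 0 k - mu == 0.
  apply/prodf_eq0; move: rmu; rewrite /pair_eigenvalue pair_root detE.
  have h1 : (\det (adj S) == 0) = false by apply/negbTE; rewrite -unitfE -unitmxE.
  have h2 : (\det S == 0) = false by apply/negbTE; rewrite -unitfE -unitmxE.
  by rewrite !mulf_eq0 h1 h2 orbF.
split.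
  rewrite subr_eq0 in ek; rewrite -(eqP ek).
  pose x := invmx S *m delta_mx k (0 : 'I_1).
  have Sx : S *m x = delta_mx k 0 by rewrite /x mulmxA mulmxV // mul1mx.
  have xnz : x != 0.
    apply/eqP => x0; move: Sx; rewrite x0 mulmx0 => /matrixP /(_ k 0).
    by rewrite !mxE !eqxx /= => /eqP; rewrite eq_sym oner_eq0.
  by have := pM x xnz; rewrite ME sform_congr Sx sform_diag_delta.
move=> x; have NE' : N = adj S *m 1%:M *m S by rewrite mulmx1.
rewrite -subr_ge0 ME NE'.
rewrite !sform_congr sform_diag sform1 mulr_sumr -sumrB sumr_ge0 // => i _.
by rewrite -mulrBl mulr_ge0 ?exprn_ge0 // subr_ge0.
Qed.

End Bound.


Section PD.
Variables (C : numClosedFieldType) (n : nat).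
Implicit Types (B P T : 'M[C]_n) (x y : 'cV[C]_n).

Lemma sform0l B x : sform B 0 x = 0.
Proof. by rewrite /sform cadj0 !mul0mx mxE. Qed.

Lemma posdef_ge0 B x : posdef_mx B -> 0 <= sform B x x.
Proof.
move=> [_ pB]; have [->|nx] := eqVneq x 0; first by rewrite sform0l.
exact/ltW/pB.
Qed.

Lemma posdef_unit T : posdef_mx T -> T \in unitmx.
Proof.
move=> [_ pT]; rewrite unitmxE unitfE -det_tr; apply/negP => /det0P [v vnz vT].
have xnz : v^T != 0 by apply: contra vnz => /eqP h; rewrite -[v]trmxK h trmx0.
have := pT _ xnz; rewrite /sform -mulmxA.
have -> : T *m v^T = 0 by rewrite -[T]trmxK -trmx_mul vT trmx0.
by rewrite mulmx0 mxE ltxx.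
Qed.

Lemma posdef_inv T : posdef_mx T -> posdef_mx (invmx T).
Proof.
move=> pdT; have Tu := posdef_unit pdT; case: pdT => hT pT; split.
  by rewrite /hermitian_mx cadj_inv hT.
move=> x xnz; pose u := invmx T *m x.
have Tu' : T *m u = x by rewrite /u mulmxA mulmxV // mul1mx.
have unz : u != 0 by apply: contra xnz => /eqP u0; rewrite -Tu' u0 mulmx0.
rewrite -Tu' -sform_congr hT mulmxKV //; exact: pT.
Qed.

Lemma cauchy_schwarz B x y : posdef_mx B ->
  `|sform B y x| ^+ 2 <= sform B y y * sform B x x.
Proof.
move=> pdB; have hB := pdB.1.
have [->|ynz] := eqVneq y 0; first by rewrite !sform0l normr0 expr0n mul0r.
have spos := pdB.2 y ynz.
set s := sform B y y; set t := sform B y x; set X := sform B x x.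
have := posdef_ge0 (s *: x - t *: y) pdB.
rewrite !(sformBl, sformBr, sformZl, sformZr) -/s -/t -/X.
have -> : sform B x y = t^* by rewrite /t sform_herm.
have -> : s^* = s by apply/CrealP; rewrite /s sform_real.
have -> : s * (s * X - t * t^*) - t^* * (s * t - t * s)
          = s * (s * X - t * t^*) by ring.
by rewrite pmulr_rge0 // subr_ge0 normCK.
Qed.

End PD.


Lemma step_inv (C : numClosedFieldType) (n : nat) (Al T : 'M[C]_n) x0 (st : cg_state C n) w u v :
  cg_x st - x0 = T *m (Al *m w) -> cg_p st = T *m (Al *m u) -> cg_r st = Al *m v ->
  exists w' u' v',
  [/\ cg_x (cg_step Al T st) - x0 = T *m (Al *m w'),
      cg_p (cg_step Al T st) = T *m (Al *m u') &
      cg_r (cg_step Al T st) = Al *m v'].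
Proof.
move=> Ex Ep Er; rewrite /cg_step /cg_w /=.
set dl := cg_gamma st / cg_den Al st.
set r' := cg_r st - dl *: (Al *m cg_p st).
set bt := (_ / cg_gamma st).
exists (w + dl *: u), ((v - dl *: (T *m (Al *m u))) + bt *: u),
       (v - dl *: (T *m (Al *m u))).
have Er' : r' = Al *m (v - dl *: (T *m (Al *m u))).
  by rewrite /r' Er Ep mulmxBr scalemxAr.
split.
- by rewrite addrAC Ex Ep !mulmxDr !scalemxAr.
- by rewrite Er' Ep !mulmxDr !scalemxAr.
- exact: Er'.
Qed.

End Helpers.
Import Helpers.

Theorem lemma2p3 (C : numClosedFieldType) (n : nat)
  (A M T : 'M[C]_n) (l1 mu1 c : C) (x0 : 'cV[C]_n) :
  hermitian_mx A -> posdef_mx M -> posdef_mx T ->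
  smallest_pair_eigenvalue A M l1 ->
  simple_pair_eigenvalue A M l1 ->
  ~ (x0 != 0 /\ pair_eigenspace A M l1 x0) ->
  ~ (forall y, pair_eigenspace A M l1 y -> sform M y x0 = 0) ->
  smallest_pair_eigenvalue M (invmx T) mu1 ->
  is_cos_angle (invmx T) x0 (pair_eigenspace A M l1) c ->
  forall i : nat, cg_defined (A - l1 *: M) T x0 i ->
    let xi := cg_x (cg_iter (A - l1 *: M) T x0 i) in
    (forall y, pair_eigenspace A M l1 y -> sform (invmx T) y (xi - x0) = 0) /\
    mu1 * sform (invmx T) x0 x0 * c ^+ 2 <= sform M xi xi.
Proof.
move=> hA pdM pdT _ _ _ _ smu [[y [Xy ynz] cE] _] i _ xi.
set Al := A - l1 *: M.
have Tu := posdef_unit pdT.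
have pdN := posdef_inv pdT.
have inv : forall j, exists w u v,
  [/\ cg_x (cg_iter Al T x0 j) - x0 = T *m (Al *m w),
      cg_p (cg_iter Al T x0 j) = T *m (Al *m u) &
      cg_r (cg_iter Al T x0 j) = Al *m v].
  elim => [|j [w [u [v [Ex Ep Er]]]]].
    by exists 0, (-x0), (-x0); split; rewrite /= ?subrr ?mulmx0 ?mulmxN.
  exact: step_inv Ex Ep Er.
have ortho : forall y' w, pair_eigenspace A M l1 y' ->
    sform (invmx T) y' (T *m (Al *m w)) = 0.
  move=> y' w hy; have [->|y'nz] := eqVneq y' 0; first by rewrite sform0l.
  have hM := pdM.1.
  have l1r : l1 \is Num.real.
    have sMpos := pdM.2 y' y'nz.
    have E : sform A y' y' = l1 * sform M y' y'.
      by rewrite /sform -mulmxA hy -scalemxAr mxE mulmxA.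
    have -> : l1 = sform A y' y' / sform M y' y'.
      by rewrite E mulfK // gt_eqF.
    by rewrite rpred_div ?sform_real.
  have AlH : adj Al = Al by rewrite /Al cadjB cadjZ hA hM conj_Creal.
  have Aly : Al *m y' = 0.
    by rewrite /Al mulmxBl -scalemxAl hy subrr.
  rewrite /sform !mulmxA mulmxKV // -[adj y' *m Al]cadjK cadjM cadjK AlH Aly.
  by rewrite cadj0 !mul0mx mxE.
have orth : forall y', pair_eigenspace A M l1 y' -> sform (invmx T) y' (xi - x0) = 0.
  move=> y' hy; have [w [_ [_ [Ex _ _]]]] := inv i.
  by rewrite /xi Ex ortho.
split => //.
have [mupos mubound] := pencil_bound pdM pdN smu.
apply: le_trans (mubound xi); rewrite -mulrA ler_pM2l //.
have ty : sform (invmx T) y xi = sform (invmx T) y x0.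
  by apply/eqP; rewrite -subr_eq0 -sformBr orth.
rewrite -cE /cos_angle_ratio.
set a := sform (invmx T) x0 x0.
have [a0|anz] := eqVneq a 0.
  by rewrite a0 mul0r; apply: posdef_ge0.
have spos := pdN.2 y ynz.
set s := sform (invmx T) y y in spos *.
rewrite expr_div_n exprMn !sqrtCK.
have snz : s != 0 by rewrite gt_eqF.
have -> : a * (`|sform (invmx T) y x0| ^+ 2 / (s * a)) =
          `|sform (invmx T) y x0| ^+ 2 / s by field; rewrite snz anz.
rewrite ler_pdivrMr // -ty mulrC; exact: cauchy_schwarz.
Qed.
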